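(* Let $S=(\mathbb{R}\cup\{-\infty\},\max,+,-\infty,0)$ be the max-plus semiring, let $A\in M_{n}(S)$ with $\det_{\varepsilon}(A)\neq-\infty$, and let $b\in S^{n}$ be a regular vector. Then $(AA^{-})_{ij}\le b_i-b_j$ for all $i,j\in\{1,\dots,n\}$ if and only if the system $AX=b$ has the maximal solution $X^{*}=A^{-}b$.
   Context: Matrix operations over $S$: $(A+B)_{ij}=\max(a_{ij},b_{ij})$, $(AC)_{ij}=\max_k(a_{ik}+c_{kj})$. The $\varepsilon$-determinant (with the identity $\varepsilon$-function) of $A\in M_n(S)$ is $\det_{\varepsilon}(A)=\max_{\sigma\in\mathcal{S}_n}\sum_{i=1}^{n}a_{i\sigma(i)}$. For $n\ge 2$, $A(i|j)$ denotes the $(n-1)\times(n-1)$ submatrix obtained by deleting row $i$ and column $j$, and the $\varepsilon$-adjoint is $\mathrm{adj}_{\varepsilon}(A)_{ij}=\det_{\varepsilon}(A(j|i))$. When $\det_{\varepsilon}(A)$ is a unit of $S$ (i.e. $\neq-\infty$), the pseudo-inverse of $A$ is $A^{-}=(a^{-}_{ij})$ with $a^{-}_{ij}=\mathrm{adj}_{\varepsilon}(A)_{ij}-\det_{\varepsilon}(A)$ (ordinary real subtraction). A vector $b\in S^n$ is regular if $b_i\neq-\infty$ for all $i$; $b_i-b_j$ is ordinary real subtraction. A solution $X^{*}$ of $AX=b$ is maximal if $X\le X^{*}$ componentwise for every solution $X$. *)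

(* Defs.v *)
(* Max-plus semiring S = R ∪ {-oo} over the reals,
   encoded as [option R] with [None] standing for -oo. *)
From HB Require Import structures.
From mathcomp Require Import all_boot all_order all_fingroup all_algebra.
From mathcomp Require Import reals.
Set Implicit Arguments. Unset Strict Implicit. Unset Printing Implicit Defensive.
Import Order.TTheory GRing.Theory Num.Theory.
Local Open Scope ring_scope.

Section MaxPlus.
Variable R : realType.

Definition mp := option R.

Definition mpadd (x y : mp) : mp :=
  match x, y with
  | None, _ => y
  | _, None => x
  | Some a, Some b => Some (Num.max a b)
  end.

Definition mpmul (x y : mp) : mp :=
  match x, y with
  | Some a, Some b => Some (a + b)
  | _, _ => None
  end.

Definition mple (x y : mp) : Prop :=
  match x, y with
  | None, _ => True
  | Some _, None => False
  | Some a, Some b => a <= b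
  end.

Definition mpmulmx m n p (A : 'M[mp]_(m, n)) (C : 'M[mp]_(n, p)) : 'M[mp]_(m, p) :=
  \matrix_(i, j) \big[mpadd/None]_(k < n) mpmul (A i k) (C k j).

(* epsilon-determinant with the identity epsilon-function *)
Definition mpdet n (A : 'M[mp]_n) : mp :=
  \big[mpadd/None]_(s : 'S_n) \big[mpmul/Some 0]_(i < n) A i (s i).

Definition mpadj n (A : 'M[mp]_n.+1) : 'M[mp]_n.+1 :=
  \matrix_(i, j) mpdet (row' j (col' i A)).

(* pseudo-inverse: a^-_ij = adj(A)_ij - det(A) (meaningful when det A <> -oo) *)
Definition mppinv n (A : 'M[mp]_n.+1) : 'M[mp]_n.+1 :=
  \matrix_(i, j) match mpadj A i j, mpdet A with
                 | Some a, Some d => Some (a - d)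
                 | _, _ => None
                 end.

Definition mpregular n (b : 'cV[mp]_n) : Prop := forall i, b i ord0 <> None.

Definition mpdiff (x y : mp) : mp :=
  match x, y with
  | Some a, Some c => Some (a - c)
  | _, _ => None
  end.

Definition mpvle n (X Y : 'cV[mp]_n) : Prop := forall i, mple (X i ord0) (Y i ord0).

Definition mp_maximal_solution n (A : 'M[mp]_n) (b Xs : 'cV[mp]_n) : Prop :=
  mpmulmx A Xs = b /\ forall X : 'cV[mp]_n, mpmulmx A X = b -> mpvle X Xs.

End MaxPlus.

(* Main.v *)
Require Import Defs.
From HB Require Import structures.
From mathcomp Require Import all_boot all_order all_fingroup all_algebra.
From mathcomp Require Import reals.
From mathcomp Require Import lra.
Set Implicit Arguments. Unset Strict Implicit. Unset Printing Implicit Defensive.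
Import Order.TTheory GRing.Theory Num.Theory.
Local Open Scope ring_scope.

Section Aux.
Variable R : realType.
Implicit Types x y z : mp R.

Lemma mpaddA : associative (@mpadd R).
Proof. by case=> [a|] [b|] [c|] //=; rewrite maxA. Qed.
Lemma mpaddC : commutative (@mpadd R).
Proof. by case=> [a|] [b|] //=; rewrite maxC. Qed.
Lemma mpadd0 : left_id None (@mpadd R).
Proof. by case. Qed.
Lemma mpmulA : associative (@mpmul R).
Proof. by case=> [a|] [b|] [c|] //=; rewrite addrA. Qed.
Lemma mpmulC : commutative (@mpmul R).
Proof. by case=> [a|] [b|] //=; rewrite addrC. Qed.
Lemma mpmul1 : left_id (Some 0) (@mpmul R).
Proof. by case=> [a|] //=; rewrite add0r. Qed.

HB.instance Definition _ := Monoid.isComLaw.Build (mp R) None (@mpadd R) mpaddA mpaddC mpadd0.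
HB.instance Definition _ := Monoid.isComLaw.Build (mp R) (Some 0) (@mpmul R) mpmulA mpmulC mpmul1.

Lemma mple_refl x : mple x x.
Proof. by case: x => //= a. Qed.
Lemma mple_trans x y z : mple x y -> mple y z -> mple x z.
Proof. case: x => [a|] //; case: y => [b|] //; case: z => [c|] //=; lra. Qed.
Lemma mple_addl x y : mple x (mpadd x y).
Proof. case: x => [a|] //; case: y => [b|] //=; rewrite ?le_max ?lexx //. Qed.
Lemma mple_addr x y : mple y (mpadd x y).
Proof. by rewrite mpaddC; apply: mple_addl. Qed.
Lemma mpadd_le x y z : mple x z -> mple y z -> mple (mpadd x y) z.
Proof. case: x => [a|] //; case: y => [b|] //; case: z => [c|] //= h1 h2. by rewrite ge_max h1 h2. Qed.
Lemma mpmul_le2 x y x' y' : mple x x' -> mple y y' -> mple (mpmul x y) (mpmul x' y').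
Proof. case: x => [a|] //; case: y => [b|]; case: x' => [a'|] //; case: y' => [b'|] //=; lra. Qed.

Lemma big_ge (I : finType) (F : I -> mp R) j : mple (F j) (\big[@mpadd R/None]_i F i).
Proof. rewrite (bigD1 j) //=; apply: mple_addl. Qed.
Lemma big_le (I : finType) (F : I -> mp R) c : (forall i, mple (F i) c) -> mple (\big[@mpadd R/None]_i F i) c.
Proof. move=> h; elim/big_rec: _ => //= i x _ hx; exact: mpadd_le. Qed.
Lemma mpadd_cases x y : mple (mpadd x y) x \/ mple (mpadd x y) y.
Proof.
case: x => [a|]; case: y => [b|] /=; try by [left; rewrite ?lexx | right; rewrite ?lexx].
by case: (leP a b) => h; [right|left]; rewrite /= ?lexx.
Qed.
Lemma big_attained (I : finType) (F : I -> mp R) (i0 : I) : exists j, mple (\big[@mpadd R/None]_i F i) (F j).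
Proof.
elim/big_rec: _ => [|i x _ [j hj]]; first by exists i0.
case: (mpadd_cases (F i) x) => h; first by exists i.
by exists j; apply: mple_trans hj.
Qed.

Lemma mple_anti x y : mple x y -> mple y x -> x = y.
Proof. case: x => [a|]; case: y => [b|] //= h1 h2. by congr Some; apply/le_anti; rewrite h1 h2. Qed.

Lemma mpmul_addr x y z : mpmul x (mpadd y z) = mpadd (mpmul x y) (mpmul x z).
Proof. case: x => [a|]; case: y => [b|]; case: z => [c|] //=. by rewrite addr_maxr. Qed.

Lemma mpmul_distr (I : finType) x (F : I -> mp R) :
  mpmul x (\big[@mpadd R/None]_j F j) = \big[@mpadd R/None]_j mpmul x (F j).
Proof. apply: big_endo => [y z|]; first exact: mpmul_addr. by case: x. Qed.

Lemma mpmul_distl (I : finType) x (F : I -> mp R) :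
  mpmul (\big[@mpadd R/None]_j F j) x = \big[@mpadd R/None]_j mpmul (F j) x.
Proof. rewrite mpmulC mpmul_distr; apply: eq_bigr => j _; exact: mpmulC. Qed.

Lemma laplace n (A : 'M[mp R]_n.+1) (s : 'S_n.+1) i :
  mple (\big[@mpmul R/Some 0]_(l < n.+1) A l (s l))
       (mpmul (A i (s i)) (mpdet (row' i (col' (s i) A)))).
Proof.
rewrite (bigD1_ord i) //=.
apply: mpmul_le2; first exact: mple_refl.
pose ulsf (k : 'I_n) := odflt k (unlift (s i) (s (lift i k))).
have ulsfK k : lift (s i) (ulsf k) = s (lift i k).
  rewrite /ulsf; have:= neq_lift i k.
  by rewrite -(can_eq (permK s)) => /unlift_some[] ? ? ->.
have inj_ulsf : injective ulsf.
  move=> k1 k2 e; apply: (@lift_inj _ i); apply: (@perm_inj _ s).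
  by rewrite -!ulsfK e.
rewrite /mpdet; apply: mple_trans (big_ge _ (perm inj_ulsf)).
rewrite (eq_bigr (fun l => row' i (col' (s i) A) l (perm inj_ulsf l))).
  exact: mple_refl.
by move=> l _; rewrite !mxE permE ulsfK.
Qed.
End Aux.

Theorem theorem4p3 (R : realType) (n : nat) (A : 'M[mp R]_n.+1) (b : 'cV[mp R]_n.+1) :
  mpdet A <> None ->
  mpregular b ->
  ((forall i j : 'I_n.+1,
      mple (mpmulmx A (mppinv A) i j) (mpdiff (b i ord0) (b j ord0)))
   <-> mp_maximal_solution A b (mpmulmx (mppinv A) b)).
Proof.
move=> hdet hb.
case Ed: (mpdet A) hdet => [d|] // _.
have [s hs] := big_attained (fun s : 'S_n.+1 => \big[@mpmul R/Some 0]_(i < n.+1) A i (s i)) 1%g.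
rewrite -/(mpdet A) Ed in hs.
have K i : mple (Some 0) (mpmul (A i (s i)) (mppinv A (s i) i)).
  have L := mple_trans hs (laplace A s i).
  rewrite !mxE Ed.
  move: L; case: (A i (s i)) => [a|] //; case: (mpdet _) => [m|] //=; lra.
set P := mpmulmx A (mppinv A).
set Xs := mpmulmx (mppinv A) b.
have D i : mple (Some 0) (P i i).
  by rewrite /P mxE; apply: mple_trans (K i) (big_ge _ (s i)).
have E' k : exists j, mple (Some 0) (mpmul (mppinv A k j) (A j k)).
  exists (s^-1 k)%g; have := K (s^-1 k)%g; rewrite permKV mpmulC; exact.
have Q i : mpmulmx A Xs i ord0 = \big[@mpadd R/None]_j mpmul (P i j) (b j ord0).
  rewrite mxE.
  transitivity (\big[@mpadd R/None]_k \big[@mpadd R/None]_j mpmul (A i k) (mpmul (mppinv A k j) (b j ord0))).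
    apply: eq_bigr => k _; rewrite /Xs mxE; exact: mpmul_distr.
  rewrite exchange_big /=; apply: eq_bigr => j _.
  rewrite /P mxE.
  symmetry; transitivity (\big[@mpadd R/None]_k mpmul (mpmul (A i k) (mppinv A k j)) (b j ord0)).
    exact: mpmul_distl.
  apply: eq_bigr => k _.
  by rewrite mpmulA.
have Max : forall X : 'cV[mp R]_n.+1, mpmulmx A X = b -> mpvle X Xs.
  move=> X hX k; have [j hj] := E' k.
  have hbj : mple (mpmul (A j k) (X k ord0)) (b j ord0).
    by rewrite -hX mxE; exact: (big_ge (fun l => mpmul (A j l) (X l ord0))).
  rewrite /Xs mxE; apply: mple_trans (big_ge _ j).
  apply: mple_trans (mpmul_le2 (mple_refl (mppinv A k j)) hbj).
  rewrite mpmulA -{1}(mpmul1 (X k ord0)).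
  by apply: mpmul_le2 => //; apply: mple_refl.
split.
- move=> C; split => //.
  apply/matrixP => i j; rewrite (ord1 j) Q.
  apply: mple_anti.
    apply: big_le => j'; move: (C i j') (hb i) (hb j').
    case: (b i ord0) => [bi|] //; case: (b j' ord0) => [bj|] //.
    case: (P i j') => [p|] //= h _ _; lra.
  apply: mple_trans (big_ge _ i).
  rewrite -{1}(mpmul1 (b i ord0)); apply: mpmul_le2 => //; exact: mple_refl.
- move=> [hAX _] i j.
  have := big_ge (fun j => mpmul (P i j) (b j ord0)) j.
  rewrite -Q hAX; move: (hb i) (hb j).
  case: (b i ord0) => [bi|] //; case: (b j ord0) => [bj|] //.
  case: (P i j) => [p|] //= _ _ h; lra.
Qed.
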